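(* Let $k\in\{1,2,\dots\}\cup\{\infty\}$, $a,b>0$, $f\in D^k(\mathbb{R},0)$, $\tau_1=f'(0)$, and $q=w_b\circ f\circ w_a\in H^k(\mathbb{R},0)$. (a) If $\tau_1>0$, then $q$ is $C^1$ if and only if $a=1/b$. (b) If $\tau_1<0$, then $q$ is $C^1$ if and only if $a=b$. (c) Suppose $q$ is $C^1$, $a,b\neq1$, and $n$ is an integer with $2\le n\le k$. Then $q$ is $C^n$ if and only if $f''(0)=\cdots=f^{(n)}(0)=0$.
   Context: $H^k(\mathbb{R},0)$ is the group of homeomorphisms $h$ of $\mathbb{R}$ with $h(0)=0$ whose restriction to $\mathbb{R}\setminus\{0\}$ is a $C^k$-diffeomorphism of $\mathbb{R}\setminus\{0\}$; $D^k(\mathbb{R},0)$ is its subgroup of $C^k$-diffeomorphisms of $\mathbb{R}$. For $c>0$, $w_c\colon\mathbb{R}\to\mathbb{R}$ is $w_c(x)=x$ for $x\le0$ and $w_c(x)=cx$ for $x>0$. *)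

(* Defs.v *)
From Stdlib Require Import Reals Lra.
From Coquelicot Require Import Coquelicot.
Open Scope R_scope.

(* Smoothness index k in {0,1,2,...} u {oo}: Some n = n, None = infinity. *)
Definition le_ext (n : nat) (k : option nat) : Prop :=
  match k with Some m => (n <= m)%nat | None => True end.

(* Derivatives are local, so for
   U open this is C^n-ness of the restriction of f to U. *)
Definition Cn_on (U : R -> Prop) (n : nat) (f : R -> R) : Prop :=
  forall m, (m <= n)%nat -> forall x, U x ->
    ex_derive_n f m x /\ continuous (Derive_n f m) x.

Definition Ck_on (U : R -> Prop) (k : option nat) (f : R -> R) : Prop :=
  forall n, le_ext n k -> Cn_on U n f.

Definition everywhere : R -> Prop := fun _ => True.
Definition punctured : R -> Prop := fun x => x <> 0.

Definition Cn (n : nat) (f : R -> R) : Prop := Cn_on everywhere n f.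

(* H^k(R,0): homeomorphisms h of R with h 0 = 0 whose restriction to R\{0}
   is a C^k-diffeomorphism of R\{0} (the inverse of the restriction is the
   restriction of the inverse g). *)
Definition Hk (k : option nat) (h : R -> R) : Prop :=
  h 0 = 0 /\
  exists g : R -> R,
    (forall x, g (h x) = x) /\ (forall y, h (g y) = y) /\
    (forall x, continuous h x) /\ (forall x, continuous g x) /\
    Ck_on punctured k h /\ Ck_on punctured k g.

Definition Dk (k : option nat) (h : R -> R) : Prop :=
  h 0 = 0 /\
  exists g : R -> R,
    (forall x, g (h x) = x) /\ (forall y, h (g y) = y) /\
    Ck_on everywhere k h /\ Ck_on everywhere k g.

Definition w (c : R) (x : R) : R := if Rle_dec x 0 then x else c * x.

(* Main.v *)
Require Import Defs.
From Stdlib Require Import Reals Lra Lia.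
From Coquelicot Require Import Coquelicot.
Open Scope R_scope.

Lemma loc_lt (P : R -> Prop) x : x < 0 -> (forall y, y < 0 -> P y) -> locally x P.
Proof. intros Hx H. apply filter_imp with (fun y => y < 0). exact H. apply (open_lt 0). exact Hx. Qed.

Lemma loc_gt (P : R -> Prop) x : 0 < x -> (forall y, 0 < y -> P y) -> locally x P.
Proof. intros Hx H. apply filter_imp with (fun y => 0 < y). exact H. apply (open_gt 0). exact Hx. Qed.

Lemma cont_to_ed f x : continuous f x -> forall eps, 0 < eps ->
  exists d, 0 < d /\ forall y, Rabs (y - x) < d -> Rabs (f y - f x) < eps.
Proof.
  intros H eps He. apply continuity_pt_filterlim in H.
  destruct (H eps He) as [d [Hd Hy]]. exists d; split; auto.
  intros y Hyd. destruct (Req_dec y x) as [->|Hne].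
  - rewrite Rminus_eq_0, Rabs_R0; auto.
  - apply (Hy y). split. split; [exact I| auto]. simpl. unfold R_dist. exact Hyd.
Qed.

Lemma ed_to_cont f x : (forall eps, 0 < eps ->
  exists d, 0 < d /\ forall y, Rabs (y - x) < d -> Rabs (f y - f x) < eps) -> continuous f x.
Proof.
  intros H. apply continuity_pt_filterlim. intros eps He.
  destruct (H eps He) as [d [Hd Hy]]. exists d; split; auto.
  intros y [_ Hyd]. apply Hy. exact Hyd.
Qed.

Lemma lim_eq (F G : R -> R) (P : R -> Prop) :
  continuous F 0 -> continuous G 0 -> (forall y, P y -> F y = G y) ->
  (forall d, 0 < d -> exists y, P y /\ Rabs y < d) -> F 0 = G 0.
Proof.
  intros HF HG HP Hex. destruct (Req_dec (F 0) (G 0)) as [|Hne]; auto. exfalso.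
  set (e := Rabs (F 0 - G 0)).
  assert (He : 0 < e) by (apply Rabs_pos_lt; lra).
  destruct (cont_to_ed F 0 HF (e/2)) as [d1 [Hd1 H1]]; [lra|].
  destruct (cont_to_ed G 0 HG (e/2)) as [d2 [Hd2 H2]]; [lra|].
  destruct (Hex (Rmin d1 d2)) as [y [Py Hy]]. apply Rmin_pos; auto.
  assert (Hy1 : Rabs (y - 0) < d1) by (rewrite Rminus_0_r; eapply Rlt_le_trans; [exact Hy| apply Rmin_l]).
  assert (Hy2 : Rabs (y - 0) < d2) by (rewrite Rminus_0_r; eapply Rlt_le_trans; [exact Hy| apply Rmin_r]).
  specialize (H1 y Hy1). specialize (H2 y Hy2). rewrite (HP y Py) in H1.
  unfold e in *. revert H1 H2. split_Rabs; lra.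
Qed.

Definition pw (A B : R -> R) (y : R) := if Rlt_dec y 0 then A y else B y.

Lemma pw_cont A B y : (forall x, continuous A x) -> (forall x, continuous B x) -> A 0 = B 0 ->
  continuous (pw A B) y.
Proof.
  intros HA HB H0. destruct (Rtotal_order y 0) as [Hy|[->|Hy]].
  - apply continuous_ext_loc with A; [|apply HA].
    apply loc_lt; auto. intros z Hz. unfold pw. destruct Rlt_dec; lra.
  - apply ed_to_cont. intros eps He.
    destruct (cont_to_ed A 0 (HA 0) eps He) as [d1 [Hd1 H1]].
    destruct (cont_to_ed B 0 (HB 0) eps He) as [d2 [Hd2 H2]].
    exists (Rmin d1 d2). split. apply Rmin_pos; auto.
    intros z Hz. unfold pw. destruct (Rlt_dec 0 0); [lra|].
    destruct (Rlt_dec z 0).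
    + rewrite <- H0. apply H1. eapply Rlt_le_trans; [exact Hz| apply Rmin_l].
    + apply H2. eapply Rlt_le_trans; [exact Hz| apply Rmin_r].
  - apply continuous_ext_loc with B; [|apply HB].
    apply loc_gt; auto. intros z Hz. unfold pw. destruct Rlt_dec; lra.
Qed.

Lemma pw_derive A B y : (forall x, ex_derive A x) -> (forall x, ex_derive B x) -> A 0 = B 0 ->
  Derive A 0 = Derive B 0 -> is_derive (pw A B) y (pw (Derive A) (Derive B) y).
Proof.
  intros HA HB H0 H1. destruct (Rtotal_order y 0) as [Hy|[->|Hy]].
  - unfold pw at 2. destruct Rlt_dec; [|lra].
    apply is_derive_ext_loc with A; [|apply Derive_correct, HA].
    apply loc_lt; auto. intros z Hz. unfold pw. destruct Rlt_dec; lra.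
  - unfold pw at 2. destruct (Rlt_dec 0 0); [lra|].
    apply is_derive_Reals. intros eps He.
    pose proof (Derive_correct A 0 (HA 0)) as DA. apply is_derive_Reals in DA.
    pose proof (Derive_correct B 0 (HB 0)) as DB. apply is_derive_Reals in DB.
    destruct (DA eps He) as [d1 H1']. destruct (DB eps He) as [d2 H2'].
    assert (Hd : 0 < Rmin d1 d2) by (apply Rmin_pos; apply cond_pos).
    exists (mkposreal _ Hd). intros h Hh Hhd. simpl in Hhd.
    unfold pw. rewrite Rplus_0_l. destruct (Rlt_dec 0 0); [lra|].
    destruct (Rlt_dec h 0).
    + rewrite <- H0, <- H1. specialize (H1' h Hh). rewrite Rplus_0_l in H1'. apply H1'.
      eapply Rlt_le_trans; [exact Hhd| apply Rmin_l].
    + specialize (H2' h Hh). rewrite Rplus_0_l in H2'. apply H2'.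
      eapply Rlt_le_trans; [exact Hhd| apply Rmin_r].
  - unfold pw at 2. destruct Rlt_dec; [lra|].
    apply is_derive_ext_loc with B; [|apply Derive_correct, HB].
    apply loc_gt; auto. intros z Hz. unfold pw. destruct Rlt_dec; lra.
Qed.
Lemma glue n (L Rr q : R -> R) : Cn n L -> Cn n Rr ->
  (forall y, y < 0 -> q y = L y) -> (forall y, 0 < y -> q y = Rr y) -> q 0 = Rr 0 ->
  (Cn n q <-> forall j, (j <= n)%nat -> Derive_n L j 0 = Derive_n Rr j 0).
Proof.
  intros HL HR Hneg Hpos H0. split.
  - intros Hq j Hj.
    assert (E1 : Derive_n L j 0 = Derive_n q j 0).
    { apply lim_eq with (fun y => y < 0).
      - apply (HL j Hj 0 I). - apply (Hq j Hj 0 I).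
      - intros y Hy. apply Derive_n_ext_loc. apply loc_lt; auto.
        intros z Hz. symmetry. auto.
      - intros d Hd. exists (- d / 2). split; [lra|]. rewrite Rabs_left; lra. }
    assert (E2 : Derive_n Rr j 0 = Derive_n q j 0).
    { apply lim_eq with (fun y => 0 < y).
      - apply (HR j Hj 0 I). - apply (Hq j Hj 0 I).
      - intros y Hy. apply Derive_n_ext_loc. apply loc_gt; auto.
        intros z Hz. symmetry. auto.
      - intros d Hd. exists (d / 2). split; [lra|]. rewrite Rabs_right; lra. }
    congruence.
  - intros Hm.
    assert (Claim : forall m, (m <= n)%nat -> forall y,
               Derive_n q m y = pw (Derive_n L m) (Derive_n Rr m) y).
    { induction m as [|m IH]; intros Hmn y.
      - simpl. unfold pw. destruct (Rlt_dec y 0); auto.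
        destruct (Rtotal_order y 0) as [?|[->|?]]; [lra| |auto].
        exact H0.
      - change (Derive (Derive_n q m) y = pw (Derive_n L (S m)) (Derive_n Rr (S m)) y).
        rewrite (Derive_ext _ _ y (IH ltac:(lia))).
        apply is_derive_unique. apply pw_derive.
        + intros x. apply (HL (S m) Hmn x I).
        + intros x. apply (HR (S m) Hmn x I).
        + apply Hm; lia.
        + apply (Hm (S m) Hmn). }
    intros m Hmn x _. split.
    + destruct m as [|m]; [exact I|].
      change (ex_derive (Derive_n q m) x).
      apply ex_derive_ext with (pw (Derive_n L m) (Derive_n Rr m)).
      { intros t. symmetry. apply Claim; lia. }
      eexists. apply pw_derive.
      * intros z. apply (HL (S m) Hmn z I).
      * intros z. apply (HR (S m) Hmn z I).
      * apply Hm; lia.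
      * apply (Hm (S m) Hmn).
    + apply continuous_ext with (pw (Derive_n L m) (Derive_n Rr m)).
      { intros t. symmetry. apply Claim; lia. }
      apply pw_cont.
      * intros z. apply (HL m Hmn z I).
      * intros z. apply (HR m Hmn z I).
      * apply (Hm m Hmn).
Qed.

Lemma Cn_sc n f c d : Cn n f -> Cn n (fun x => c * f (d * x)).
Proof.
  intros Hf m Hm x _.
  assert (Hloc : forall y, locally (d * y) (fun t => forall k, (k <= m)%nat -> ex_derive_n f k t)).
  { intros y. apply filter_forall. intros t k Hk. apply (Hf k ltac:(lia) t I). }
  split.
  - apply ex_derive_n_scal_l with (f := fun y => f (d * y)). apply ex_derive_n_comp_scal. apply Hloc.
  - apply continuous_ext with (fun y => c * (d ^ m * Derive_n f m (d * y))).
    { intros t. rewrite Derive_n_scal_l. rewrite Derive_n_comp_scal; auto. }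
    apply continuous_comp with (f := fun y => Derive_n f m (d * y)) (g := fun z => c * (d ^ m * z)).
    + apply continuous_comp with (f := fun y => d * y).
      * apply (@ex_derive_continuous R_AbsRing R_NormedModule). auto_derive. auto.
      * apply (Hf m Hm _ I).
    + apply (@ex_derive_continuous R_AbsRing R_NormedModule). auto_derive. auto.
Qed.

Lemma Dn_sc n f c d x : Cn n f -> Derive_n (fun x => c * f (d * x)) n x = c * (d ^ n * Derive_n f n (d * x)).
Proof.
  intros Hf. rewrite Derive_n_scal_l. rewrite Derive_n_comp_scal; auto.
  apply filter_forall. intros t k Hk. apply (Hf k Hk t I).
Qed.

Lemma Cn_mono n m f : (m <= n)%nat -> Cn n f -> Cn m f.
Proof. intros H Hf j Hj. apply Hf; lia. Qed.

Lemma case_gen n f a c1 c2 (q : R -> R) : Cn n f -> f 0 = 0 ->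
  (forall y, y < 0 -> q y = c1 * f y) -> (forall y, 0 < y -> q y = c2 * f (a * y)) -> q 0 = 0 ->
  (Cn n q <-> forall j, (j <= n)%nat -> c1 * Derive_n f j 0 = c2 * (a ^ j * Derive_n f j 0)).
Proof.
  intros Hf Hf0 Hn Hp H0.
  rewrite (glue n (fun x => c1 * f (1 * x)) (fun x => c2 * f (a * x)) q).
  - assert (E : forall j c d, (j <= n)%nat ->
      Derive_n (fun x => c * f (d * x)) j 0 = c * (d ^ j * Derive_n f j 0)).
    { intros j c d Hj. rewrite Dn_sc by (apply (Cn_mono n); auto). rewrite Rmult_0_r. reflexivity. }
    split; intros H j Hj; specialize (H j Hj); rewrite !E in *; auto;
      rewrite pow1, Rmult_1_l in *; exact H.
  - apply Cn_sc; auto.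
  - apply Cn_sc; auto.
  - intros y Hy. rewrite Rmult_1_l. auto.
  - auto.
  - rewrite H0, Rmult_0_r, Hf0. ring.
Qed.
Lemma sign_pos f t : (forall x, continuous f x) -> (forall x, f x = 0 -> x = 0) -> f 0 = 0 ->
  is_derive f 0 t -> 0 < t -> (forall x, 0 < x -> 0 < f x) /\ (forall x, x < 0 -> f x < 0).
Proof.
  intros Hc Hinj Hf0 D Ht. apply is_derive_Reals in D.
  destruct (D t Ht) as [del Hdel].
  assert (Hcs : continuity f) by (intros x; apply continuity_pt_filterlim; apply Hc).
  pose proof (cond_pos del) as Hdp.
  assert (Hsmall : forall h, h <> 0 -> Rabs h < del -> 0 < f h / h).
  { intros h Hh Hhd. specialize (Hdel h Hh Hhd). rewrite Rplus_0_l, Hf0, Rminus_0_r in Hdel.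
    revert Hdel. split_Rabs; lra. }
  split.
  - intros x Hx. set (h := Rmin x (del/2)).
    assert (Hh0 : 0 < h) by (apply Rmin_pos; lra).
    assert (Hhx : h <= x) by apply Rmin_l.
    assert (Hhd : h <= del/2) by apply Rmin_r.
    assert (Hq : 0 < f h / h) by (apply Hsmall; [lra| rewrite Rabs_right; lra]).
    assert (Hfh : 0 < f h).
    { replace (f h) with ((f h / h) * h) by (field; lra). apply Rmult_lt_0_compat; lra. }
    destruct (Rlt_le_dec 0 (f x)) as [|Hle]; auto. exfalso.
    destruct (IVT_gen f h x 0 Hcs) as [z [Hz Hfz]].
    { unfold Rmin, Rmax; destruct Rle_dec; lra. }
    apply Hinj in Hfz. assert (0 < Rmin h x) by (apply Rmin_pos; lra). lra.
  - intros x Hx. set (h := - Rmin (- x) (del/2)).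
    assert (Hh0 : 0 < - h) by (unfold h; rewrite Ropp_involutive; apply Rmin_pos; lra).
    assert (Hhx : - h <= - x) by (unfold h; rewrite Ropp_involutive; apply Rmin_l).
    assert (Hhd : - h <= del/2) by (unfold h; rewrite Ropp_involutive; apply Rmin_r).
    assert (Hq : 0 < f h / h) by (apply Hsmall; [lra| rewrite Rabs_left; lra]).
    assert (Hfh : f h < 0).
    { replace (f h) with (- ((f h / h) * (- h))) by (field; lra).
      assert (0 < (f h / h) * (- h)) by (apply Rmult_lt_0_compat; lra). lra. }
    destruct (Rlt_le_dec (f x) 0) as [|Hle]; auto. exfalso.
    destruct (IVT_gen f x h 0 Hcs) as [z [Hz Hfz]].
    { unfold Rmin, Rmax; destruct Rle_dec; lra. }
    apply Hinj in Hfz. assert (Rmax x h < 0) by (unfold Rmax; destruct Rle_dec; lra). lra.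
Qed.

Lemma powne1 a m : 0 < a -> a <> 1 -> (1 <= m)%nat -> a ^ m <> 1.
Proof.
  intros Ha Ha1 Hm. destruct (Rlt_le_dec 1 a).
  - pose proof (Rlt_pow_R1 a m r ltac:(lia)). lra.
  - assert (a < 1) by lra. pose proof (pow_lt_1_compat a m ltac:(lra) ltac:(lia)). lra.
Qed.
Theorem lemma5p16 (k : option nat) (a b : R) (f : R -> R) :
  le_ext 1 k -> 0 < a -> 0 < b -> Dk k f ->
  let tau1 := Derive f 0 in
  let q := fun x => w b (f (w a x)) in
  (tau1 > 0 -> (Cn 1 q <-> a = 1 / b)) /\
  (tau1 < 0 -> (Cn 1 q <-> a = b)) /\
  (Cn 1 q -> a <> 1 -> b <> 1 ->
     forall n : nat, (2 <= n)%nat -> le_ext n k ->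
       (Cn n q <-> forall j : nat, (2 <= j <= n)%nat -> Derive_n f j 0 = 0)).
Proof.
  intros Hk1 Ha Hb [Hf0 [g [Hgf [Hfg [Hfk Hgk]]]]] tau1 q.
  assert (Cnf : forall n, le_ext n k -> Cn n f) by (intros n H; exact (Hfk n H)).
  pose proof (Cnf 1%nat Hk1) as Cf1.
  assert (Hcf : forall x, continuous f x) by (intros x; exact (proj2 (Cf1 0%nat ltac:(lia) x I))).
  assert (Hdf : forall x, ex_derive f x) by (intros x; exact (proj1 (Cf1 1%nat ltac:(lia) x I))).
  assert (Hdg : forall x, ex_derive g x) by (intros x; exact (proj1 (Hgk 1%nat Hk1 1%nat ltac:(lia) x I))).
  assert (Hinj : forall x, f x = 0 -> x = 0).
  { intros x Hx. transitivity (g (f x)); [symmetry; apply Hgf|]. rewrite Hx.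
    rewrite <- Hf0 at 1. apply Hgf. }
  assert (Dtau : is_derive f 0 tau1) by (apply Derive_correct, Hdf).
  assert (Ht0 : tau1 <> 0).
  { intros Ht.
    pose proof (@is_derive_comp R_AbsRing R_NormedModule g f 0 (Derive g (f 0)) tau1
                 (Derive_correct g (f 0) (Hdg (f 0))) Dtau) as D1.
    assert (D2 : is_derive (fun x => g (f x)) 0 1).
    { apply is_derive_ext with (fun x => x); [intros; symmetry; apply Hgf | apply (@is_derive_id R_AbsRing)]. }
    apply is_derive_unique in D1; apply is_derive_unique in D2. rewrite D1 in D2.
    rewrite Ht in D2. change (0 * Derive g (f 0) = 1) in D2. lra. }
  assert (q0 : q 0 = 0).
  { unfold q, w. destruct (Rle_dec 0 0); [|lra]. rewrite Hf0.
    destruct (Rle_dec 0 0); [reflexivity|lra]. }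
  assert (Hpos_iff : tau1 > 0 -> forall n, le_ext n k ->
    (Cn n q <-> forall j, (j <= n)%nat -> 1 * Derive_n f j 0 = b * (a ^ j * Derive_n f j 0))).
  { intros Hp n Hkn.
    destruct (sign_pos f tau1 Hcf Hinj Hf0 Dtau Hp) as [Sp Sn].
    apply case_gen; auto.
    - intros y Hy. unfold q, w. destruct (Rle_dec y 0); [|lra].
      destruct (Rle_dec (f y) 0); [ring|]. specialize (Sn y Hy). lra.
    - intros y Hy. unfold q, w. destruct (Rle_dec y 0); [lra|].
      assert (0 < a * y) by (apply Rmult_lt_0_compat; lra).
      destruct (Rle_dec (f (a * y)) 0); [|reflexivity]. specialize (Sp (a * y) H). lra. }
  assert (Hneg_iff : tau1 < 0 -> forall n, le_ext n k ->
    (Cn n q <-> forall j, (j <= n)%nat -> b * Derive_n f j 0 = 1 * (a ^ j * Derive_n f j 0))).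
  { intros Hp n Hkn.
    assert (S1 : forall x, continuous (fun x => - f x) x) by (intros x; apply (continuous_opp f x (Hcf x))).
    assert (S2 : forall x, (fun x => - f x) x = 0 -> x = 0) by (intros x Hx; apply Hinj; cbv beta in Hx; lra).
    assert (S3 : (fun x => - f x) 0 = 0) by (cbv beta; rewrite Hf0; ring).
    assert (S4 : is_derive (fun x => - f x) 0 (- tau1)) by apply (is_derive_opp f 0 tau1 Dtau).
    destruct (sign_pos (fun x => - f x) (- tau1) S1 S2 S3 S4 ltac:(lra)) as [Sp Sn].
    cbv beta in Sp, Sn.
    apply case_gen; auto.
    + intros y Hy. unfold q, w. destruct (Rle_dec y 0); [|lra].
      destruct (Rle_dec (f y) 0); [|reflexivity]. specialize (Sn y Hy). lra.
    + intros y Hy. unfold q, w. destruct (Rle_dec y 0); [lra|].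
      assert (0 < a * y) by (apply Rmult_lt_0_compat; lra).
      destruct (Rle_dec (f (a * y)) 0); [ring|]. specialize (Sp (a * y) H). lra. }
  assert (PA : tau1 > 0 -> (Cn 1 q <-> a = 1 / b)).
  { intros Hp. rewrite (Hpos_iff Hp 1%nat Hk1). split.
    - intros H. specialize (H 1%nat (le_n 1)). change (Derive_n f 1 0) with tau1 in H.
      assert (E : tau1 * (1 - a * b) = 0).
      { replace (tau1 * (1 - a * b)) with (1 * tau1 - b * (a ^ 1 * tau1)) by ring. rewrite H. ring. }
      apply Rmult_integral in E. destruct E as [E|E]; [contradiction|].
      replace a with (a * b / b) by (field; lra). replace (a * b) with 1 by lra. reflexivity.
    - intros -> j Hj. destruct j as [|[|j]].
      + simpl. rewrite Hf0. ring.
      + change (Derive_n f 1 0) with tau1. simpl. field. lra.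
      + lia. }
  assert (PB : tau1 < 0 -> (Cn 1 q <-> a = b)).
  { intros Hp. rewrite (Hneg_iff Hp 1%nat Hk1). split.
    - intros H. specialize (H 1%nat (le_n 1)). change (Derive_n f 1 0) with tau1 in H.
      assert (E : tau1 * (b - a) = 0).
      { replace (tau1 * (b - a)) with (b * tau1 - 1 * (a ^ 1 * tau1)) by ring. rewrite H. ring. }
      apply Rmult_integral in E. destruct E as [E|E]; [contradiction|]. lra.
    - intros -> j Hj. destruct j as [|[|j]].
      + simpl. rewrite Hf0. ring.
      + change (Derive_n f 1 0) with tau1. simpl. ring.
      + lia. }
  split; [exact PA|]. split; [exact PB|].
  intros Hq1 Ha1 Hb1 n Hn Hkn.
  destruct (Rtotal_order tau1 0) as [Hlt|[Heq|Hgt]]; [|contradiction|].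
  - pose proof (proj1 (PB Hlt) Hq1) as Hab. rewrite (Hneg_iff Hlt n Hkn). split.
    + intros H j Hj. specialize (H j ltac:(lia)). rewrite <- Hab in H.
      destruct j as [|[|j]]; try lia.
      set (D := Derive_n f (S (S j)) 0) in *. set (p := a ^ (S j)).
      assert (Hp : a ^ (S (S j)) = a * p) by reflexivity. rewrite Hp in H.
      assert (E : D * (a * (1 - p)) = 0).
      { replace (D * (a * (1 - p))) with (a * D - 1 * (a * p * D)) by ring. rewrite H. ring. }
      apply Rmult_integral in E. destruct E as [E|E]; auto.
      apply Rmult_integral in E. destruct E as [E|E]; [lra|].
      exfalso. apply (powne1 a (S j) Ha Ha1); [lia|]. fold p. lra.
    + intros H j Hj. destruct j as [|[|j]].
      * simpl. rewrite Hf0. ring.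
      * change (Derive_n f 1 0) with tau1. rewrite Hab. simpl. ring.
      * rewrite (H (S (S j)) ltac:(lia)). ring.
  - pose proof (proj1 (PA Hgt) Hq1) as Hab.
    assert (Hab1 : a * b = 1) by (rewrite Hab; field; lra).
    rewrite (Hpos_iff Hgt n Hkn). split.
    + intros H j Hj. specialize (H j ltac:(lia)).
      destruct j as [|[|j]]; try lia.
      set (D := Derive_n f (S (S j)) 0) in *. set (p := a ^ (S j)).
      assert (Hp : a ^ (S (S j)) = a * p) by reflexivity. rewrite Hp in H.
      assert (E : D * (1 - p) = 0).
      { replace (D * (1 - p)) with (1 * D - (a * b) * (p * D)) by (rewrite Hab1; ring).
        replace ((a * b) * (p * D)) with (b * (a * p * D)) by ring. rewrite H. ring. }
      apply Rmult_integral in E. destruct E as [E|E]; auto.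
      exfalso. apply (powne1 a (S j) Ha Ha1); [lia|]. fold p. lra.
    + intros H j Hj. destruct j as [|[|j]].
      * simpl. rewrite Hf0. ring.
      * change (Derive_n f 1 0) with tau1. simpl.
        replace (b * (a * 1 * tau1)) with ((a * b) * tau1) by ring. rewrite Hab1. ring.
      * rewrite (H (S (S j)) ltac:(lia)). ring.
Qed.
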